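(* Let $N\geq 1$ and let $f\in C^1(\mathbb{R})$ satisfy $f(0)=0$ and suppose there exists $\delta>0$ such that $f'(s)\leq 0$ for all $|s|<\delta$. Let $u_1,u_2\in C^2(\mathbb{R}^N)$ be two distinct classical solutions of $$\Delta u+f(u)=0\quad\text{in }\mathbb{R}^N,\qquad u(x)\to 0\ \text{as }|x|\to\infty,$$ with $u_1\not\equiv 0$ and $u_2\not\equiv 0$, and assume that at least one of $u_1,u_2$ changes sign in $\mathbb{R}^N$. Then $u_1-u_2$ changes sign, i.e. there exist $x,y\in\mathbb{R}^N$ with $u_1(x)-u_2(x)>0$ and $u_1(y)-u_2(y)<0$. *)

(* Defs.v *)
From HB Require Import structures.
From mathcomp Require Import all_boot all_order all_algebra.
From mathcomp Require Import all_classical all_reals all_analysis.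
Set Implicit Arguments. Unset Strict Implicit. Unset Printing Implicit Defensive.
Import Order.TTheory GRing.Theory Num.Theory.
Import numFieldNormedType.Exports.
Local Open Scope ring_scope.

Definition basis_vec {R : realType} {N : nat} (i : 'I_N) : 'rV[R]_N :=
  delta_mx 0 i.

Definition partial {R : realType} {N : nat} (i : 'I_N)
  (u : 'rV[R]_N -> R) : 'rV[R]_N -> R :=
  fun x => 'D_(basis_vec i) u x.

Definition laplacian {R : realType} {N : nat} (u : 'rV[R]_N -> R) :
  'rV[R]_N -> R :=
  fun x => \sum_(i < N) partial i (partial i u) x.

Definition C2 {R : realType} {N : nat} (u : 'rV[R]_N -> R) : Prop :=
  (forall x, differentiable u x) /\
  (forall (i : 'I_N) x, differentiable (partial i u) x) /\
  (forall (i j : 'I_N), continuous (partial j (partial i u))).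

Definition C1 {R : realType} (f : R -> R) : Prop :=
  (forall s, derivable f s 1) /\ continuous (derive1 f).

Definition vanishes_at_infinity {R : realType} {N : nat}
  (u : 'rV[R]_N -> R) : Prop :=
  forall eps : R, 0 < eps ->
    exists M : R, forall x : 'rV[R]_N, M < `|x| -> `|u x| < eps.

Definition is_solution {R : realType} {N : nat} (f : R -> R)
  (u : 'rV[R]_N -> R) : Prop :=
  C2 u /\ (forall x, laplacian u x + f (u x) = 0) /\ vanishes_at_infinity u.

Definition changes_sign {R : realType} {N : nat} (u : 'rV[R]_N -> R) : Prop :=
  exists x y : 'rV[R]_N, 0 < u x /\ u y < 0.

(* Main.v *)
Require Import Defs.
From HB Require Import structures.
From mathcomp Require Import all_boot all_order all_algebra.
From mathcomp Require Import all_classical all_reals all_analysis.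
From mathcomp Require Import ring lra.
Set Implicit Arguments. Unset Strict Implicit. Unset Printing Implicit Defensive.
Import Order.TTheory GRing.Theory Num.Theory.
Import numFieldNormedType.Exports.
Local Open Scope ring_scope.
Local Open Scope classical_set_scope.

Section S1.
Context {R : realType}.

Lemma near0'P (P : R -> Prop) : (\forall t \near 0^', P t) ->
  exists2 e : R, 0 < e & forall t, t != 0 -> `|t| < e -> P t.
Proof.
move=> /nbhs_ballP [e e0 He]; exists e => // t t0 te.
apply: He => //; rewrite /ball /= sub0r normrN //.
Qed.

Lemma lt0_near (F : R -> R) (l : R) : F @ 0^' --> l -> l < 0 ->
  \forall t \near 0^', F t < 0.
Proof. by move=> cv neg; exact: (@cvgr_lt R R (0^') _ F l cv 0 neg). Qed.

Lemma second_deriv_min (g : R -> R) (r : R) :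
  0 < r -> (forall t, derivable g t 1) -> derivable (derive1 g) 0 1 ->
  (forall t, `|t| < r -> g 0 <= g t) -> 0 <= derive1 (derive1 g) 0.
Proof.
move=> r0 dg ddg gmin.
have g'0 : derive1 g 0 = 0.
  have := @derive1_at_min R g (- r) r 0 _ _ _ _.
  move=> H; rewrite derive1E; apply: (@derive_val _ _ _ _ _ _ _ (H _ _ _ _)).
  - by rewrite -subr_ge0 opprK; apply: ltW; rewrite addr_gt0.
  - by move=> t _; exact: dg.
  - by rewrite in_itv /= oppr_lt0 r0.
  - move=> t; rewrite in_itv /= => /andP[h1 h2]; apply: gmin.
    by rewrite ltr_norml h1 h2.
rewrite leNgt; apply/negP => neg.
have cv : (fun h : R => h^-1 *: ((derive1 g \o shift 0) (h *: 1) - derive1 g 0)) @ 0^'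
   --> 'D_1 (derive1 g) 0 := ddg.
rewrite derive1E in neg.
have [e e0 He] := near0'P (lt0_near cv neg).
pose h := Num.min (e / 2) (r / 2).
have h0 : 0 < h by rewrite lt_min !divr_gt0.
have he : h < e by rewrite gt_min ltr_pdivrMr // ltr_pMr // ltr1n.
have hr : h < r by rewrite gt_min orbC ltr_pdivrMr // ltr_pMr // ltr1n.
have neg' : forall s, 0 < s -> s <= h -> derive1 g s < 0.
  move=> s s0 sh; have := He s (lt0r_neq0 s0) _.
  rewrite gtr0_norm // (le_lt_trans sh he) => /(_ isT).
  rewrite /comp /= g'0 subr0 /GRing.scale /= mulr1 addr0.
  by rewrite pmulr_rlt0 // invr_gt0.
have dd : forall x, x \in `]0, h[%R -> is_derive x 1 g (derive1 g x).
  by move=> x _; rewrite derive1E; apply: derivableP; exact: dg.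
have cc : {within `[0, h], continuous g}.
  apply: continuous_subspaceT => x.
  by apply/differentiable_continuous/derivable1_diffP; exact: dg.
have [c cin eq] := @MVT R g (derive1 g) 0 h h0 dd cc.
move: cin; rewrite in_itv /= => /andP[c0 ch].
have : g h - g 0 < 0.
  by rewrite eq subr0 pmulr_llt0 //; apply: neg' => //; apply: ltW.
by rewrite subr_lt0 ltNge gmin // gtr0_norm.
Qed.
End S1.

Section S2.
Context {R : realType} {N : nat}.
Notation V := 'rV[R]_N.

Definition line (u : V -> R) (x w : V) (t : R) := u (t *: w + x).

Lemma line_shift (u : V -> R) x w t :
  (fun h : R => h^-1 *: (line u x w (h + t) - line u x w t)) =
  (fun h : R => h^-1 *: ((u \o shift (t *: w + x)) (h *: w) - u (t *: w + x))).
Proof. by apply: funext => h /=; rewrite /line scalerDl addrA. Qed.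

Lemma derive1_line u x w t : derive1 (line u x w) t = 'D_w u (t *: w + x).
Proof. by rewrite /derive1 line_shift. Qed.

Lemma derive1_lineE u x w : derive1 (line u x w) = line (fun y => 'D_w u y) x w.
Proof. by apply: funext => t; rewrite derive1_line. Qed.

Lemma derivable_line u x w t :
  derivable (line u x w) t 1 <-> derivable u (t *: w + x) w.
Proof.
rewrite /derivable.
have -> : (fun h : R => h^-1 *: ((line u x w \o shift t) (h *: 1) - line u x w t)) =
  (fun h : R => h^-1 *: (line u x w (h + t) - line u x w t)).
  by apply: funext => h /=; rewrite [h *: 1]mulr1.
by rewrite line_shift.
Qed.

Lemma line0 u x w : line u x w 0 = u x.
Proof. by rewrite /line scale0r add0r. Qed.

Lemma entry_le_norm (x : V) j : `|x 0 j| <= `|x|.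
Proof.
rewrite [leRHS]/Num.norm /= mx_normrE.
by apply/bigmax_geP; right; exists (0, j).
Qed.

Lemma norm_basis (i : 'I_N) : `|basis_vec i : V| = 1.
Proof.
apply/eqP; rewrite eq_le; apply/andP; split.
  rewrite [leLHS]/Num.norm /= mx_normrE.
  apply/bigmax_leP; split => // -[a b] _ /=.
  rewrite /basis_vec mxE; case: (_ && _) => /=; rewrite ?normr1 ?normr0 //.
have := entry_le_norm (basis_vec i : V) i.
by rewrite /basis_vec mxE !eqxx /= normr1.
Qed.

Lemma norm_sbasis (t : R) (i : 'I_N) : `|t *: basis_vec i : V| = `|t|.
Proof. by rewrite normrZ norm_basis mulr1. Qed.

Definition lap2 (u : V -> R) (x : V) : R :=
  \sum_(i < N) derive1 (derive1 (line u x (basis_vec i))) 0.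

Lemma laplacian_lap2 u x : laplacian u x = lap2 u x.
Proof.
apply: eq_bigr => i _; rewrite derive1_lineE derive1_line scale0r add0r //.
Qed.

Definition good (u : V -> R) :=
  (forall x w, derivable u x w) /\
  (forall i x, derivable (partial i u) x (basis_vec i)).

Lemma good_line1 u x w t : good u -> derivable (line u x w) t 1.
Proof. by move=> [h _]; apply/derivable_line. Qed.

Lemma good_line2 u x i t : good u ->
  derivable (derive1 (line u x (basis_vec i))) t 1.
Proof. by move=> [_ h]; rewrite derive1_lineE; apply/derivable_line; apply: h. Qed.

Lemma lap2_min u x r : good u -> 0 < r ->
  (forall y, `|y - x| < r -> u x <= u y) -> 0 <= lap2 u x.
Proof.
move=> gu r0 umin; apply: sumr_ge0 => i _.
apply: (second_deriv_min r0).
- by move=> t; apply: good_line1.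
- exact: good_line2.
- move=> t tr; rewrite line0 /line; apply: umin.
  by rewrite addrK norm_sbasis.
Qed.
End S2.

Section S3.
Context {R : realType} {N : nat}.
Notation V := 'rV[R]_N.

Lemma lin_eq (a b : R) (u w : V -> R) :
  (fun x => a * u x + b * w x) = (a \*: u) + (b \*: w).
Proof. by []. Qed.

Lemma derive_lin (a b : R) (u w : V -> R) (x v : V) : derivable u x v -> derivable w x v ->
  'D_v (fun y : V => a * u y + b * w y) x = a * 'D_v u x + b * 'D_v w x.
Proof.
move=> du dw; rewrite lin_eq deriveD ?deriveZ //; exact: derivableZ.
Qed.

Lemma derivable_lin (a b : R) (u w : V -> R) (x v : V) : derivable u x v -> derivable w x v ->
  derivable (fun y : V => a * u y + b * w y) x v.
Proof. by move=> du dw; rewrite lin_eq; apply: derivableD; apply: derivableZ. Qed.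

Lemma partial_lin (a b : R) (u w : V -> R) i : good u -> good w ->
  partial i (fun y : V => a * u y + b * w y) =
  (fun y => a * partial i u y + b * partial i w y).
Proof.
by move=> [du _] [dw _]; apply: funext => y; rewrite /partial derive_lin.
Qed.

Lemma good_lin (a b : R) (u w : V -> R) : good u -> good w -> good (fun y : V => a * u y + b * w y).
Proof.
move=> gu gw; split; first by move=> x v; apply: derivable_lin; [case: gu|case: gw].
move=> i x; rewrite partial_lin //; apply: derivable_lin; [case: gu|case: gw] => _; exact.
Qed.

Lemma lap2_lin (a b : R) (u w : V -> R) (x : V) : good u -> good w ->
  lap2 (fun y : V => a * u y + b * w y) x = a * lap2 u x + b * lap2 w x.
Proof.
move=> gu gw; rewrite -!laplacian_lap2 /laplacian.
rewrite mulr_sumr mulr_sumr -big_split /=; apply: eq_bigr => i _.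
rewrite partial_lin // /partial derive_lin //; [case: gu|case: gw] => _; exact.
Qed.

Lemma shift_fun_eq (u : V -> R) c x v :
  (fun h : R => h^-1 *: (((fun y => u (c + y)) \o shift x) (h *: v) - u (c + x))) =
  (fun h : R => h^-1 *: ((u \o shift (c + x)) (h *: v) - u (c + x))).
Proof. by apply: funext => h /=; rewrite addrCA. Qed.

Lemma derive_shift (u : V -> R) c x v :
  'D_v (fun y => u (c + y)) x = 'D_v u (c + x).
Proof. by rewrite /derive shift_fun_eq. Qed.

Lemma derivable_shift (u : V -> R) c x v :
  derivable (fun y => u (c + y)) x v <-> derivable u (c + x) v.
Proof. by rewrite /derivable shift_fun_eq. Qed.

Lemma partial_shift (u : V -> R) c i :
  partial i (fun y => u (c + y)) = (fun y => partial i u (c + y)).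
Proof. by apply: funext => y; rewrite /partial derive_shift. Qed.

Lemma good_shift (u : V -> R) (c : V) : good u -> good (fun y : V => u (c + y)).
Proof.
move=> [du du2]; split => *; first by apply/derivable_shift.
by rewrite partial_shift; apply/derivable_shift.
Qed.

Lemma lap2_shift (u : V -> R) (c x : V) : lap2 (fun y : V => u (c + y)) x = lap2 u (c + x).
Proof.
rewrite -!laplacian_lap2 /laplacian; apply: eq_bigr => i _.
rewrite partial_shift; exact: (derive_shift (partial i u)).
Qed.

Lemma sol_good (f : R -> R) (u : V -> R) : is_solution f u -> good u.
Proof.
move=> [[d1 [d2 _]] _]; split => *; apply: diff_derivable; [exact: d1| exact: d2].
Qed.

Lemma sol_lap (f : R -> R) (u : V -> R) x : is_solution f u -> lap2 u x = - f (u x).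
Proof.
move=> [_ [h _]]; rewrite -laplacian_lap2; apply/eqP; rewrite -subr_eq0 opprK h //.
Qed.

Lemma sol_cont (f : R -> R) (u : V -> R) : is_solution f u -> continuous u.
Proof. by move=> [[d1 _] _] x; apply: differentiable_continuous. Qed.

Lemma sol_pcont (f : R -> R) (u : V -> R) i : is_solution f u -> continuous (partial i u).
Proof. by move=> [[_ [d2 _]] _] x; apply: differentiable_continuous. Qed.
End S3.

Section S4.
Context {R : realType} {N : nat}.
Notation V := 'rV[R]_N.

Definition q (y x : V) : R := \sum_(j < N) (x 0 j - y 0 j) ^+ 2.
Definition qa (w : V) : R := \sum_(j < N) (w 0 j) ^+ 2.
Definition qb (y x w : V) : R := 2 * \sum_(j < N) (w 0 j * (x 0 j - y 0 j)).

Lemma q_line (y x w : V) (t : R) : q y (t *: w + x) = qa w * t ^+ 2 + qb y x w * t + q y x.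
Proof.
rewrite /q /qa /qb.
rewrite (eq_bigr (fun j => (w 0 j) ^+ 2 * t ^+ 2 + (2 * (w 0 j * (x 0 j - y 0 j))) * t
   + (x 0 j - y 0 j) ^+ 2)); last by move=> j _; rewrite !mxE; ring.
rewrite !big_split /= -!mulr_suml -mulr_sumr //.
Qed.

Lemma sum_basis (c : 'I_N -> R) i : \sum_(j < N) (basis_vec i : V) 0 j * c j = c i.
Proof.
rewrite (bigD1 i) //= big1 ?addr0; first by rewrite /basis_vec mxE !eqxx mul1r.
by move=> j ji; rewrite /basis_vec mxE eqxx /= (negbTE ji) mul0r.
Qed.

Lemma qb_basis (y x : V) (i : 'I_N) : qb y x (basis_vec i) = 2 * (x 0 i - y 0 i).
Proof. by rewrite /qb sum_basis. Qed.

Lemma qa_basis (i : 'I_N) : qa (basis_vec i : V) = 1.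
Proof.
rewrite /qa (eq_bigr (fun j => (basis_vec i : V) 0 j * 1)); first by rewrite sum_basis.
by move=> j _; rewrite mulr1 expr2 /basis_vec mxE; case: (_ && _); rewrite ?mulr1 ?mulr0.
Qed.

Lemma basis_entry (t : R) (x : V) i : (t *: basis_vec i + x) 0 i = t + x 0 i.
Proof.
have -> : (t *: basis_vec i + x) 0 i = t * (basis_vec i : V) 0 i + x 0 i by rewrite !mxE.
by rewrite /basis_vec mxE !eqxx mulr1.
Qed.

Lemma line_derivable (u : V -> R) x w (g : R -> R) :
  (forall t, line u x w t = g t) -> derivable g 0 1 -> derivable u x w.
Proof.
move=> e dg; have -> : u = fun z => u z by [].
have := (derivable_line u x w 0).1; rewrite scale0r add0r; apply.
by have -> : line u x w = g by apply: funext.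
Qed.

Lemma line_derive (u : V -> R) x w (g : R -> R) :
  (forall t, line u x w t = g t) -> 'D_w u x = derive1 g 0.
Proof.
move=> e; have <- : line u x w = g by apply: funext.
by rewrite derive1_line scale0r add0r.
Qed.

Lemma d1_of (g : R -> R) (t v : R) : is_derive t 1 g v -> derive1 g t = v /\ derivable g t 1.
Proof. by move=> H; rewrite derive1E derive_val; split => //; case: H. Qed.

Lemma D_q (y x w : V) : 'D_w (q y) x = qb y x w /\ derivable (q y) x w.
Proof.
have e : forall t, line (q y) x w t = qa w * t ^+ 2 + qb y x w * t + q y x.
  by move=> t; rewrite /line q_line.
have [d1 d2] : derive1 (fun t : R => qa w * t ^+ 2 + qb y x w * t + q y x) 0 = qb y x w /\
     derivable (fun t : R => qa w * t ^+ 2 + qb y x w * t + q y x) 0 1.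
  by apply: d1_of; apply: is_derive_eq; rewrite /GRing.scale /=; ring.
by rewrite (line_derive e) d1; split => //; apply: line_derivable e d2.
Qed.

Lemma partial_q (y : V) (i : 'I_N) : partial i (q y) = fun x => 2 * (x 0 i - y 0 i).
Proof. by apply: funext => x; rewrite /partial (D_q y x _).1 qb_basis. Qed.

Lemma D_pq (y : V) (i : 'I_N) (x : V) : 'D_(basis_vec i) (fun x : V => 2 * (x 0 i - y 0 i)) x = 2 /\
   derivable (fun x : V => 2 * (x 0 i - y 0 i) : R) x (basis_vec i).
Proof.
have e : forall t, line (fun x : V => 2 * (x 0 i - y 0 i) : R) x (basis_vec i) t =
   2 * (t + x 0 i - y 0 i).
  by move=> t; rewrite /line basis_entry.
have [d1 d2] : derive1 (fun t : R => 2 * (t + x 0 i - y 0 i)) 0 = 2 /\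
     derivable (fun t : R => 2 * (t + x 0 i - y 0 i)) 0 1.
  by apply: d1_of; apply: is_derive_eq; rewrite /GRing.scale /=; ring.
by rewrite (line_derive e) d1; split => //; apply: line_derivable e d2.
Qed.

Lemma good_q (y : V) : good (q y).
Proof.
split; first by move=> x w; exact: (D_q y x w).2.
by move=> i x; rewrite partial_q; exact: (D_pq y i x).2.
Qed.

Lemma lap2_q (y x : V) : lap2 (q y) x = 2 * N%:R.
Proof.
rewrite -laplacian_lap2 /laplacian (eq_bigr (fun _ => 2)).
  by rewrite sumr_const card_ord mulr_natr.
by move=> i _; rewrite partial_q /partial (D_pq y i x).1.
Qed.

Definition hb (y : V) (K be : R) (x : V) : R := (K - q y x) + be * (K - q y x) ^+ 2.

Lemma D_hb (y : V) (K be : R) (x w : V) :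
  'D_w (hb y K be) x = - ((1 + 2 * be * (K - q y x)) * qb y x w) /\
  derivable (hb y K be) x w.
Proof.
set g := fun t : R => (K - (qa w * t ^+ 2 + qb y x w * t + q y x)) +
   be * (K - (qa w * t ^+ 2 + qb y x w * t + q y x)) ^+ 2.
have e : forall t, line (hb y K be) x w t = g t.
  by move=> t; rewrite /line /hb q_line.
have [d1 d2] : derive1 g 0 = - ((1 + 2 * be * (K - q y x)) * qb y x w) /\
     derivable g 0 1.
  by apply: d1_of; apply: is_derive_eq; rewrite /GRing.scale /=; ring.
by rewrite (line_derive e) d1; split => //; apply: line_derivable e d2.
Qed.

Lemma partial_hb (y : V) (K be : R) (i : 'I_N) : partial i (hb y K be) =
  fun x => - ((1 + 2 * be * (K - q y x)) * (2 * (x 0 i - y 0 i))).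
Proof. by apply: funext => x; rewrite /partial (D_hb y K be x _).1 qb_basis. Qed.

Lemma D_phb (y : V) (K be : R) (i : 'I_N) (x : V) :
  'D_(basis_vec i) (fun x : V => - ((1 + 2 * be * (K - q y x)) * (2 * (x 0 i - y 0 i)))) x
    = 8 * be * (x 0 i - y 0 i) ^+ 2 - 2 * (1 + 2 * be * (K - q y x)) /\
  derivable (fun x : V => - ((1 + 2 * be * (K - q y x)) * (2 * (x 0 i - y 0 i)))) x (basis_vec i).
Proof.
set a := x 0 i - y 0 i.
set g := fun t : R => - ((1 + 2 * be * (K - (t ^+ 2 + 2 * a * t + q y x))) * (2 * (t + a))).
have e : forall t, line (fun x : V => - ((1 + 2 * be * (K - q y x)) * (2 * (x 0 i - y 0 i))))
   x (basis_vec i) t = g t.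
  move=> t; rewrite /line q_line qa_basis qb_basis basis_entry /g /a.
  ring.
have [d1 d2] : derive1 g 0 = 8 * be * a ^+ 2 - 2 * (1 + 2 * be * (K - q y x)) /\
     derivable g 0 1.
  by apply: d1_of; apply: is_derive_eq; rewrite /GRing.scale /=; ring.
by rewrite (line_derive e) d1; split => //; apply: line_derivable e d2.
Qed.

Lemma good_hb (y : V) (K be : R) : good (hb y K be).
Proof.
split; first by move=> x w; exact: (D_hb y K be x w).2.
by move=> i x; rewrite partial_hb; exact: (D_phb y K be i x).2.
Qed.

Lemma lap2_hb (y : V) (K be : R) (x : V) : lap2 (hb y K be) x =
  8 * be * q y x - 2 * N%:R * (1 + 2 * be * (K - q y x)).
Proof.
rewrite -laplacian_lap2 /laplacian.
rewrite (eq_bigr (fun i => 8 * be * (x 0 i - y 0 i) ^+ 2 - 2 * (1 + 2 * be * (K - q y x)))).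
  rewrite big_split /= -mulr_sumr sumrN sumr_const card_ord /q.
  by rewrite -mulr_natl; ring.
by move=> i _; rewrite partial_hb /partial (D_phb y K be i x).1.
Qed.
End S4.

Section S5.
Context {R : realType} {N : nat}.
Notation V := 'rV[R]_N.

Lemma cont_coord j : continuous (fun x : V => x 0 j).
Proof. exact: coord_continuous. Qed.

Lemma cont_q y : continuous (q y : V -> R).
Proof.
have -> : q y = \sum_(j < N) (fun x : V => (x 0 j - y 0 j) ^+ 2).
  by apply: funext => x; rewrite /q fct_sumE.
apply: (big_ind (fun f : V -> R => continuous f)).
- have -> : (0 : V -> R) = cst (0:R) by [].
  exact: cst_continuous.
- by move=> f g cf cg x; apply: continuousD; [apply: cf|apply: cg].
move=> j _.
have -> : (fun x0 : V => (x0 0 j - y 0 j) ^+ 2) =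
  (fun x0 => x0 0 j - y 0 j) \* (fun x0 => x0 0 j - y 0 j).
  by apply: funext => z; rewrite /= expr2.
have c1 : continuous (fun x : V => x 0 j - y 0 j).
  move=> z; apply: continuousB; first by apply: cont_coord.
  exact: cst_continuous.
move=> x; exact: (@continuousM R V _ _ x (c1 x) (c1 x)).
Qed.

Lemma cont_poly_comp (g : V -> R) (phi : R -> R) :
  continuous g -> (forall s, derivable phi s 1) -> continuous (fun x => phi (g x)).
Proof.
move=> cg dphi x; apply: (continuous_comp (cg x)).
by apply/differentiable_continuous/derivable1_diffP; exact: dphi.
Qed.

Lemma cont_hb y K be : continuous (hb y K be : V -> R).
Proof.
apply: (cont_poly_comp (phi := fun s => (K - s) + be * (K - s) ^+ 2)).
  exact: cont_q.
move=> s; have H : is_derive s (1:R) (fun s => (K - s) + be * (K - s) ^+ 2)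
   (-1 - 2 * be * (K - s)).
  by apply: is_derive_eq; rewrite /GRing.scale /=; ring.
by case: H.
Qed.

Lemma norm_le_q (x y : V) : `|x - y| <= 1 + q y x.
Proof.
rewrite [leLHS]/Num.norm /= mx_normrE.
apply/bigmax_leP; split; first by apply: addr_ge0 => //; apply: sumr_ge0 => *; apply: sqr_ge0.
move=> [a b] _ /=; rewrite ord1 !mxE.
have H1 : `|x 0 b - y 0 b| <= 1 + (x 0 b - y 0 b) ^+ 2.
  have e : (x 0 b - y 0 b) ^+ 2 = `|x 0 b - y 0 b| ^+ 2 by rewrite real_normK ?num_real.
  rewrite e; have := normr_ge0 (x 0 b - y 0 b); nra.
have H2 : (x 0 b - y 0 b) ^+ 2 <= q y x.
  rewrite /q (bigD1 b) //= lerDl; apply: sumr_ge0 => *; apply: sqr_ge0.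
lra.
Qed.

Lemma q_le_norm (x y : V) : q y x <= N%:R * `|x - y| ^+ 2.
Proof.
have -> : N%:R * `|x - y| ^+ 2 = \sum_(j < N) `|x - y| ^+ 2.
  by rewrite sumr_const card_ord mulr_natl.
rewrite /q; apply: ler_sum => j _.
have := entry_le_norm (x - y) j; rewrite !mxE => h.
rewrite -real_normK ?num_real //; apply: lerXn2r => //; rewrite nnegrE //.
Qed.

Lemma q_ge0 (y x : V) : 0 <= q y x.
Proof. by apply: sumr_ge0 => *; apply: sqr_ge0. Qed.

Lemma evt_min (g : V -> R) (A : set V) (M : R) (x0 : V) :
  continuous g -> closed A -> (forall x, A x -> `|x| <= M) -> A x0 ->
  exists c, A c /\ forall t, A t -> g c <= g t.
Proof.
move=> cg clA bA Ax0.
have cA : compact A.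
  apply: bounded_closed_compact => //.
  exists M; split; first by rewrite num_real.
  by move=> M' MM' x Ax; apply: le_trans (bA x Ax) (ltW MM').
have [c cA' H] := EVT_min_rV (f := g) (ex_intro _ x0 Ax0) cA (continuous_subspaceT cg).
by exists c; split; [rewrite inE in cA'|move=> t At; apply: H; rewrite inE].
Qed.

Lemma closed_le_fun (g : V -> R) (c : R) : continuous g -> closed [set x | g x <= c].
Proof. by move=> cg; apply: (preimage_closed (f := g) (D := [set r | r <= c])) => //; apply: closed_le. Qed.

Lemma closed_ge_fun (g : V -> R) (c : R) : continuous g -> closed [set x | c <= g x].
Proof. by move=> cg; apply: (preimage_closed (f := g) (D := [set r | c <= r])) => //; apply: closed_ge. Qed.
End S5.

Section S6.
Context {R : realType} {N : nat}.
Notation V := 'rV[R]_N.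

Lemma near_open (g : V -> R) (x : V) (a b : R) : continuous g -> a < g x -> g x < b ->
  exists2 r : R, 0 < r & forall y, `|y - x| < r -> a < g y /\ g y < b.
Proof.
move=> cg ha hb.
have h1 := @cvgr_gt R V (nbhs x) _ g (g x) (cg x) a ha.
have h2 := @cvgr_lt R V (nbhs x) _ g (g x) (cg x) b hb.
have h3 : \forall y \near x, a < g y /\ g y < b.
  by near=> y; split; near: y; [exact: h1 | exact: h2].
move: h3 => /nbhs_ballP [r r0 Hr]; exists r => // y yr.
by apply: Hr; rewrite -ball_normE /ball_ /= distrC.
Unshelve. all: by end_near. Qed.
End S6.

Section S7.
Context {R : realType}.

Lemma gt0_near (F : R -> R) (l : R) : F @ 0^' --> l -> 0 < l ->
  \forall t \near 0^', 0 < F t.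
Proof. by move=> cv pos; exact: (@cvgr_gt R R (0^') _ F l cv 0 pos). Qed.

Lemma deriv_right_min (g : R -> R) (tau : R) : derivable g 0 1 -> 0 < tau ->
  (forall t, 0 < t -> t < tau -> g 0 <= g t) -> 0 <= derive1 g 0.
Proof.
move=> dg tau0 gmin; rewrite leNgt; apply/negP => neg.
have cv : (fun h : R => h^-1 *: ((g \o shift 0) (h *: 1) - g 0)) @ 0^'
   --> 'D_1 g 0 := dg.
rewrite derive1E in neg.
have [e e0 He] := near0'P (lt0_near cv neg).
pose h := Num.min (e / 2) (tau / 2).
have h0 : 0 < h by rewrite lt_min !divr_gt0.
have he : h < e by rewrite gt_min ltr_pdivrMr // ltr_pMr // ltr1n.
have ht : h < tau by rewrite gt_min orbC ltr_pdivrMr // ltr_pMr // ltr1n.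
have := He h (lt0r_neq0 h0) _; rewrite gtr0_norm // he => /(_ isT).
rewrite /comp /= /GRing.scale /= mulr1 addr0 pmulr_rlt0 ?invr_gt0 //.
by rewrite subr_lt0 ltNge gmin.
Qed.
End S7.

Section S8.
Context {R : realType} {N : nat}.
Notation V := 'rV[R]_N.

Lemma q_eq0 (y x : V) : q y x = 0 -> x = y.
Proof.
move=> h; apply/matrixP => a j; rewrite ord1.
have : (x 0 j - y 0 j) ^+ 2 <= 0.
  rewrite -h /q (bigD1 j) //= lerDl; apply: sumr_ge0 => *; apply: sqr_ge0.
have := sqr_ge0 (x 0 j - y 0 j) => h1 h2.
have : (x 0 j - y 0 j) ^+ 2 = 0 by apply/eqP; rewrite eq_le h1 h2.
by move/eqP; rewrite sqrf_eq0 subr_eq0 => /eqP.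
Qed.

Lemma qa_diff (y p : V) : qa (y - p) = q y p.
Proof. by rewrite /qa /q; apply: eq_bigr => j _; rewrite !mxE -sqrrN opprB. Qed.

Lemma qb_diff (y p : V) : qb y p (y - p) = - (2 * q y p).
Proof.
rewrite /qb /q -mulrN -sumrN; congr (_ * _); apply: eq_bigr => j _; rewrite !mxE.
by rewrite expr2; ring.
Qed.

Lemma q_self (y : V) : q y y = 0.
Proof. by rewrite /q big1 // => j _; rewrite subrr expr0n. Qed.
End S8.

Section S9.
Context {R : realType} {N : nat}.
Notation V := 'rV[R]_N.

Lemma cont_lin (a b : R) (u w : V -> R) : continuous u -> continuous w ->
  continuous (fun x => a * u x + b * w x).
Proof.
move=> cu cw x.
have ca : continuous (fun x : V => a * u x).
  move=> y; apply: (@continuousM R V (fun _ => a) u y); [exact: cst_continuous|exact: cu].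
have cb : continuous (fun x : V => b * w x).
  move=> y; apply: (@continuousM R V (fun _ => b) w y); [exact: cst_continuous|exact: cw].
apply: (@continuousD R R V (fun x => a * u x) (fun x => b * w x) x); [exact: ca|exact: cb].
Qed.

Lemma norm_bound (x y : V) (C : R) : q y x <= C -> `|x| <= 1 + C + `|y|.
Proof.
move=> h; have -> : x = (x - y) + y by rewrite subrK.
apply: le_trans (ler_normD _ _) _; rewrite lerD2r.
by apply: le_trans (norm_le_q x y) _; rewrite lerD2l.
Qed.

Lemma smp (v : V -> R) (L : R) : (0 < N)%N -> good v -> continuous v -> 0 < L ->
  (forall x, 0 <= v x) -> (forall x, lap2 v x <= L * v x) ->
  forall xs, v xs = 0 -> forall y0, v y0 = 0.
Proof.
move=> N0 gv cv L0 vge lapv xs vxs y0.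
apply/eqP; rewrite eq_le vge andbT leNgt; apply/negP => vy0.
set C := q y0 xs.
have xsA : v xs <= 0 /\ q y0 xs <= C by rewrite vxs.
have [p [[vp qp] pmin]] := evt_min (g := q y0)
  (A := [set x | v x <= 0 /\ q y0 x <= C]) (M := 1 + C + `|y0|) (x0 := xs)
  (cont_q (y := y0)) (closedI (closed_le_fun (c := 0) cv) (closed_le_fun (c := C) (cont_q (y := y0))))
  (fun x hx => norm_bound hx.2) xsA.
have vp0 : v p = 0 by apply/eqP; rewrite eq_le vp vge.
set r2 := q y0 p.
have zmin : forall x, v x = 0 -> r2 <= q y0 x.
  move=> x vx; have [h|h] := lerP (q y0 x) C.
    by apply: pmin; split => //; rewrite vx.
  by apply: le_trans qp (ltW h).
have pos_in : forall x, q y0 x < r2 -> 0 < v x.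
  move=> x h; rewrite lt_def vge andbT; apply/eqP => vx0.
  by have := zmin x vx0; rewrite leNgt h.
have r20 : 0 < r2.
  rewrite lt_def q_ge0 andbT; apply/eqP => r2e.
  have py := q_eq0 r2e; move: vy0; rewrite -py vp0 ltxx //.
set Nr : R := N%:R.
have Nr0 : 0 < Nr by rewrite ltr0n.
set be := Nr / r2.
have be0 : 0 < be by rewrite divr_gt0.
have ber : be * r2 = Nr by rewrite divfK // gt_eqF.
set Cc := 8 * be + 4 * Nr * be + L + L * be.
have Cc0 : 0 < Cc by rewrite /Cc; nra.
set mu := Num.min (Num.min (r2 / 2) 1) (Nr / Cc).
have mu0 : 0 < mu by rewrite !lt_min !divr_gt0 // ltr01.
have mur : mu <= r2 / 2 by rewrite /mu !ge_min lexx.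
have mu1 : mu <= 1 by rewrite /mu !ge_min lexx orbT.
have muC : mu * Cc <= Nr.
  have : mu <= Nr / Cc by rewrite /mu ge_min lexx orbT.
  by rewrite ler_pdivlMr.
have y0I : q y0 y0 <= r2 - mu by rewrite q_self subr_ge0; apply: le_trans mur _; rewrite ler_pdivrMr // ler_pMr // ler1n.
have [c [qc cmin]] := evt_min (g := v) (A := [set x | q y0 x <= r2 - mu])
  (M := 1 + (r2 - mu) + `|y0|) (x0 := y0) cv
  (closed_le_fun (c := r2 - mu) (cont_q (y := y0))) (fun x hx => norm_bound hx) y0I.
set eta := v c.
have eta0 : 0 < eta by apply: pos_in; apply: le_lt_trans qc _; rewrite ltrBlDr ltrDl.
set H := mu + be * mu ^+ 2.
have H0 : 0 < H by rewrite /H; nra.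
set eps := eta / H.
have eps0 : 0 < eps by rewrite divr_gt0.
have epsH : eps * H = eta by rewrite divfK // gt_eqF.
set hh := hb y0 r2 be.
have ghh : good hh by apply: good_hb.
set z := fun x => 1 * v x + (- eps) * hh x.
have gz : good z by apply: good_lin.
have cz : continuous z by apply: cont_lin => //; apply: cont_hb.
have lap_hb : forall x, r2 - mu <= q y0 x -> q y0 x <= r2 -> L * hh x <= lap2 hh x.
  move=> x h1 h2; rewrite /hh lap2_hb /hb.
  set s := r2 - q y0 x.
  have qx : q y0 x = r2 - s by rewrite /s opprB addrC subrK.
  have s0 : 0 <= s by rewrite subr_ge0.
  have smu : s <= mu by rewrite /s lerBlDr addrC -lerBlDr.
  rewrite qx.
  have e1 : 8 * be * (r2 - s) = 8 * Nr - 8 * be * s by rewrite -ber; ring.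
  rewrite e1.
  have h3 : s * Cc <= mu * Cc by rewrite ler_pM2r.
  have h4 : L * be * s * s <= L * be * s.
    by rewrite -[leRHS]mulr1 ler_wpM2l // ?(le_trans smu mu1) // mulr_ge0 // mulr_ge0 // ltW.
  have eCc : s * Cc = 8 * be * s + 4 * Nr * be * s + L * s + L * be * s by rewrite /Cc; ring.
  have h5 : L * (s + be * s ^+ 2) = L * s + L * be * s * s by ring.
  rewrite h5; lra.
have hhE : forall x, hh x = (r2 - q y0 x) + be * (r2 - q y0 x) ^+ 2 by [].
have zE : forall x, z x = v x - eps * hh x by move=> x; rewrite /z mul1r mulNr.
have pA : r2 - mu <= q y0 p /\ q y0 p <= r2 by split => //; rewrite lerBlDr lerDl ltW.
have zA : forall x, r2 - mu <= q y0 x -> q y0 x <= r2 -> 0 <= z x.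
  have [x1 [[a1 a2] x1min]] := evt_min (g := z)
    (A := [set x | r2 - mu <= q y0 x /\ q y0 x <= r2]) (M := 1 + r2 + `|y0|) (x0 := p) cz
    (closedI (closed_ge_fun (c := r2 - mu) (cont_q (y := y0))) (closed_le_fun (c := r2) (cont_q (y := y0))))
    (fun x hx => norm_bound hx.2) pA.
  move=> x ax bx; apply: le_trans (x1min x (conj ax bx)).
  rewrite leNgt; apply/negP => zneg.
  have [a2'|a2'] := ltrP (q y0 x1) r2; last first.
    have e : q y0 x1 = r2 by apply/eqP; rewrite eq_le a2 a2'.
    move: zneg; rewrite zE hhE e subrr expr0n mulr0 addr0 mulr0 subr0 ltNge vge //.
  have [a1'|a1'] := ltrP (r2 - mu) (q y0 x1); last first.
    have e : q y0 x1 = r2 - mu by apply/eqP; rewrite eq_le a1 a1'.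
    have vx1 : eta <= v x1 by apply: cmin; rewrite /= e.
    move: zneg; rewrite zE hhE e.
    have -> : r2 - (r2 - mu) = mu by ring.
    rewrite -/H epsH.
    by rewrite subr_lt0 ltNge vx1.
  have [r r0 Hr] := near_open (cont_q (y := y0)) a1' a2'.
  have := lap2_min gz r0 (fun y hy => x1min y (conj (ltW (Hr y hy).1) (ltW (Hr y hy).2))).
  rewrite /z lap2_lin // mul1r mulNr.
  have := lapv x1; have := lap_hb x1 a1 a2.
  move: zneg; rewrite zE => zneg h1 h2 h3.
  have : L * (v x1 - eps * hh x1) < 0 by rewrite pmulr_rlt0.
  have h4 : eps * (L * hh x1) <= eps * lap2 hh x1 by rewrite ler_pM2l.
  nra.
have zp : z p = 0.
  by rewrite zE hhE subrr expr0n mulr0 addr0 mulr0 vp0 subr0.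
set w := y0 - p.
have qlt : forall t, q y0 (t *: w + p) = r2 * t ^+ 2 - 2 * r2 * t + r2.
  by move=> t; rewrite q_line qa_diff qb_diff -/r2; ring.
set tau := mu / (2 * r2).
have tau0 : 0 < tau by rewrite divr_gt0 // mulr_gt0.
have gl : forall t, 0 < t -> t < tau -> line z p w 0 <= line z p w t.
  move=> t t0 tt; rewrite line0 zp /line.
  have tt' : t * (2 * r2) < mu by rewrite -ltr_pdivlMr // mulr_gt0.
  apply: zA; rewrite qlt; nra.
have d := deriv_right_min (good_line1 (x := p) (w := w) (t := 0) gz) tau0 gl.
rewrite derive1_line scale0r add0r /z derive_lin in d; last 2 first.
- by case: gv.
- by case: ghh.
have dv : 'D_w v p = 0.
  have H1 : is_derive (0:R) 1 (line v p w) 0.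
    apply: (@derive1_at_min R (line v p w) (-1) 1 0).
    - by rewrite -subr_ge0 opprK.
    - by move=> t _; apply: good_line1.
    - by rewrite in_itv /= oppr_lt0 ltr01.
    - by move=> t _; rewrite line0 vp0; apply: vge.
  have := derive1_line v p w 0; rewrite scale0r add0r => <-.
  by rewrite derive1E derive_val.
have dh : 'D_w hh p = 2 * r2.
  rewrite /hh (D_hb y0 r2 be p w).1 -/r2 qb_diff -/r2 subrr mulr0 addr0 mul1r.
  by rewrite opprK.
move: d; rewrite dv dh mulr0 add0r mulNr oppr_ge0 leNgt => /negP; apply.
by rewrite mulr_gt0 // mulr_gt0.
Qed.
End S9.
Section S10.
Context {R : realType} {N : nat}.
Notation V := 'rV[R]_N.

Lemma cont_normf (g : V -> R) : continuous g -> continuous (fun y => - `|g y|).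
Proof.
move=> cg x; apply: (@continuousN R R V (fun y => `|g y|) x).
apply: (continuous_comp (cg x)); exact: (@norm_continuous R R^o).
Qed.

Lemma closed_ballV (rho : R) : closed [set y : V | `|y| <= rho].
Proof. by apply: (closed_le_fun (g := Num.norm)); exact: norm_continuous. Qed.

Lemma cont_bounded_ball (g : V -> R) (rho : R) : continuous g ->
  exists M : R, forall y, `|y| <= rho -> `|g y| <= M.
Proof.
move=> cg; have [rho0|rho0] := ltrP rho 0.
  by exists 0 => y hy; have := normr_ge0 y; rewrite leNgt (le_lt_trans hy rho0).
have [c [_ cmin]] := evt_min (g := fun y => - `|g y|) (A := [set y : V | `|y| <= rho])
  (M := rho) (x0 := 0) (cont_normf cg) (closed_ballV (rho := rho)) (fun x h => h) (ltac:(by rewrite /= normr0)).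
by exists `|g c| => y hy; rewrite -lerN2; apply: cmin.
Qed.

Lemma vanish_bounded (g : V -> R) : continuous g -> vanishes_at_infinity g ->
  exists M : R, forall y, `|g y| <= M.
Proof.
move=> cg vg; have [R0 HR0] := vg 1 ltr01.
have [M HM] := cont_bounded_ball R0 cg.
exists (Num.max M 1) => y; have [h|h] := lerP `|y| R0.
  by rewrite le_max HM.
by rewrite le_max (ltW (HR0 y h)) orbT.
Qed.
End S10.

Section S11.
Context {R : realType}.

Lemma near_openR (g : R -> R) (t c : R) : {for t, continuous g} -> g t < c ->
  exists2 r : R, 0 < r & forall s, `|s - t| < r -> g s < c.
Proof.
move=> cg hc.
have h3 : \forall s \near t, g s < c := @cvgr_lt R R (nbhs t) (nbhs_filter t) g (g t) cg c hc.
move: h3 => /nbhs_ballP [r r0 Hr]; exists r => // y yr.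
by apply: Hr; rewrite -ball_normE /ball_ /= distrC.
Qed.

Lemma C1_cont (f : R -> R) : C1 f -> continuous f.
Proof. by move=> [df _] x; apply/differentiable_continuous/derivable1_diffP. Qed.

Lemma f_noninc (f : R -> R) (de : R) : C1 f ->
  (forall s, `|s| < de -> derive1 f s <= 0) ->
  forall a b, `|a| < de -> `|b| < de -> a <= b -> f b <= f a.
Proof.
move=> [df _] fneg a b ha hb ab.
have dd : forall x, x \in `]a, b[%R -> is_derive x 1 f (derive1 f x).
  by move=> x _; rewrite derive1E; apply: derivableP; exact: df.
have cc : {within `[a, b], continuous f}.
  apply: continuous_subspaceT => x.
  by apply/differentiable_continuous/derivable1_diffP; exact: df.
have [c cin eq] := @MVT_segment R f (derive1 f) a b ab dd cc.
move: cin; rewrite in_itv /= => /andP[ac cb].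
have hc : `|c| < de.
  rewrite ltr_norml; move: ha hb; rewrite !ltr_norml => /andP[a1 a2] /andP[b1 b2].
  by rewrite (lt_le_trans a1 ac) (le_lt_trans cb b2).
have : f b - f a <= 0 by rewrite eq mulr_le0_ge0 // ?fneg // subr_ge0.
by rewrite subr_le0.
Qed.

Lemma f_lip (f : R -> R) (M : R) : C1 f ->
  exists2 L : R, 0 < L & forall a b, `|a| <= M -> `|b| <= M -> `|f a - f b| <= L * `|a - b|.
Proof.
move=> [df cdf]; have [M0|M0] := ltrP M 0.
  exists 1 => // a b ha; have := normr_ge0 a; rewrite leNgt (le_lt_trans ha M0) //.
have cabs : {within `[- M, M], continuous (fun s => `|derive1 f s|)}.
  apply: continuous_subspaceT => x.
  apply: (continuous_comp (cdf x)); exact: (@norm_continuous R R^o).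
have [c _ cmax] := @EVT_max R (fun s => `|derive1 f s|) (- M) M
  (ltac:(by rewrite -subr_ge0 opprK -mulr2n mulrn_wge0)) cabs.
exists (`|derive1 f c| + 1); first by rewrite ltr_wpDl.
suff H : forall a b, `|a| <= M -> `|b| <= M -> a <= b ->
    `|f a - f b| <= (`|derive1 f c| + 1) * `|a - b|.
  move=> a b ha hb; case: (boolP (a <= b)) => ab; first exact: H.
  rewrite -ltNge in ab.
  by rewrite (distrC (f a)) (distrC a); exact: H hb ha (ltW ab).
move=> a b ha hb ab.
have dd : forall x, x \in `]a, b[%R -> is_derive x 1 f (derive1 f x).
  by move=> x _; rewrite derive1E; apply: derivableP; exact: df.
have cc : {within `[a, b], continuous f}.
  apply: continuous_subspaceT => x.
  by apply/differentiable_continuous/derivable1_diffP; exact: df.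
have [e ein eq] := @MVT_segment R f (derive1 f) a b ab dd cc.
move: ein; rewrite in_itv /= => /andP[ae eb].
have he : `|derive1 f e| <= `|derive1 f c|.
  apply: cmax; rewrite in_itv /=; move: ha hb; rewrite !ler_norml => /andP[a1 a2] /andP[b1 b2].
  by rewrite (le_trans a1 ae) (le_trans eb b2).
rewrite distrC eq normrM; apply: ler_pM => //.
by apply: le_trans he _; rewrite lerDl.
by rewrite distrC.
Qed.
End S11.

Section S12.
Context {R : realType} {N : nat}.
Notation V := 'rV[R]_N.

Lemma line_diff_bound (U : V -> R) (x d : V) (t s Md : R) :
  (forall y w, derivable U y w) -> t <= s ->
  (forall r, t <= r -> r <= s -> `|'D_d U (r *: d + x)| <= Md) ->
  `|U (s *: d + x) - U (t *: d + x)| <= Md * (s - t).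
Proof.
move=> dU ts hb.
have dl : forall r, derivable (line U x d) r 1 by move=> r; apply/derivable_line.
have dd : forall r, r \in `]t, s[%R -> is_derive r 1 (line U x d) ('D_d U (r *: d + x)).
  move=> r _; rewrite -derive1_line derive1E; apply: derivableP; exact: dl.
have cc : {within `[t, s], continuous (line U x d)}.
  apply: continuous_subspaceT => r.
  by apply/differentiable_continuous/derivable1_diffP; exact: dl.
have [c cin eq] := @MVT_segment R (line U x d) _ t s ts dd cc.
move: cin; rewrite in_itv /= => /andP[tc cs].
have st0 : 0 <= s - t by rewrite subr_ge0.
rewrite /line in eq; rewrite eq normrM (ger0_norm st0).
by apply: ler_wpM2r; [rewrite subr_ge0 | exact: hb].
Qed.

Lemma sol_bounded (f : R -> R) (U : V -> R) : is_solution f U ->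
  exists M : R, forall y, `|U y| <= M.
Proof. by move=> hU; apply: vanish_bounded; [exact: sol_cont hU | case: hU => _ []]. Qed.

Lemma sol_lip2 (f : R -> R) (U W : V -> R) : C1 f -> is_solution f U -> is_solution f W ->
  exists2 L : R, 0 < L & forall y z, `|f (U y) - f (W z)| <= L * `|U y - W z|.
Proof.
move=> hf hU hW; have [MU HU] := sol_bounded hU; have [MW HW] := sol_bounded hW.
have [L L0 HL] := f_lip (Num.max MU MW) hf.
exists L => // y z; apply: HL; rewrite le_max ?HU ?HW ?orbT //.
Qed.
Lemma slide (f : R -> R) (U W : V -> R) (d : V) (de : R) :
  (0 < N)%N -> C1 f -> 0 < de -> (forall s, `|s| < de -> derive1 f s <= 0) ->
  is_solution f U -> is_solution f W -> (forall x, W x <= U x) -> U <> W ->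
  `|d| = 1 -> continuous (fun y => 'D_d U y) ->
  (forall t, 0 <= t -> forall x, W x <= U (t *: d + x)) \/
  (exists tau, 0 < tau /\ forall x, U (tau *: d + x) = W x).
Proof.
move=> N0 hf de0 hde hU hW WU UW nd cDU.
case: (pselect (exists t, 0 <= t /\ exists x, U (t *: d + x) < W x)); last first.
  move=> nex; left => t t0 x; rewrite leNgt; apply/negP => h.
  by apply: nex; exists t; split => //; exists x.
move=> [t0 [t00 [x0 hx0]]]; right.
set S := [set t : R | 0 <= t /\ exists x, U (t *: d + x) < W x].
have Slb : has_lbound S by exists 0 => t [].
have Sinf : has_inf S by split => //; exists t0; split => //; exists x0.
set ts := inf S.
have ts0 : 0 <= ts by apply: lb_le_inf; [exists t0; split => //; exists x0 | move=> t []].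
have below : forall t, 0 <= t -> t < ts -> forall x, W x <= U (t *: d + x).
  move=> t t0' tts x; rewrite leNgt; apply/negP => h.
  have : ts <= t by apply: ge_inf => //; split => //; exists x.
  by rewrite leNgt tts.
have gU := sol_good hU; have gW := sol_good hW.
have cU := sol_cont hU; have cW := sol_cont hW.
have at_ts : forall x, W x <= U (ts *: d + x).
  move=> x; rewrite leNgt; apply/negP => h.
  have [ts00|tspos] := eqVneq ts 0.
    by move: h; rewrite ts00 scale0r add0r ltNge WU.
  have tsp : 0 < ts by rewrite lt_def tspos ts0.
  have cl : {for ts, continuous (line U x d)}.
    by apply/differentiable_continuous/derivable1_diffP; apply: good_line1.
  have [r r0 Hr] := near_openR cl h.
  set m := Num.min r ts.
  have m0 : 0 < m by rewrite lt_min r0 tsp.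
  have mts : m <= ts by rewrite ge_min lexx orbT.
  have mr : m <= r by rewrite ge_min lexx.
  pose s := ts - m / 2.
  have sts : s < ts by rewrite /s; lra.
  have s0 : 0 <= s by rewrite /s; lra.
  have := below s s0 sts x; rewrite leNgt => /negP; apply; apply: Hr.
  have -> : s - ts = - (m / 2) by rewrite /s; ring.
  rewrite normrN ger0_norm; lra.
set c := ts *: d.
set v := fun x => 1 * U (c + x) + (-1) * W x.
have vE : forall x, v x = U (ts *: d + x) - W x by move=> x; rewrite /v mul1r mulN1r.
have vge : forall x, 0 <= v x by move=> x; rewrite vE subr_ge0 at_ts.
have gv : good v := good_lin 1 (-1) (good_shift c gU) gW.
have ct : continuous (fun z : V => c + z).
  move=> z; apply: (@continuousD R V V (cst c) id z); [exact: cst_continuous | exact: cvg_id].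
have cUc : continuous (fun z : V => U (c + z)).
  move=> y; exact: (continuous_comp (ct y) (cU _)).
have cv : continuous v := cont_lin (a := 1) (b := -1) cUc cW.
have [L L0 HL] := sol_lip2 hf hU hW.
have lapv : forall x, lap2 v x <= L * v x.
  move=> x; rewrite (lap2_lin 1 (-1) x (good_shift c gU) gW) lap2_shift.
  rewrite (sol_lap (c + x) hU) (sol_lap x hW) mul1r mulN1r opprK vE.
  have h1 := HL (c + x) x.
  have h2 : `|U (c + x) - W x| = U (c + x) - W x by rewrite ger0_norm // subr_ge0 at_ts.
  have h3 : - (f (U (c + x)) - f (W x)) <= `|f (U (c + x)) - f (W x)|.
    by rewrite -normrN ler_norm.
  rewrite h2 in h1; rewrite /c in h1 h3 *; lra.
case: (pselect (exists x, v x = 0)).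
  move=> [xs vxs].
  have v0 := smp N0 gv cv L0 vge lapv vxs.
  have [ts00|tspos] := eqVneq ts 0.
    exfalso; apply: UW; apply: funext => y; have := v0 y; rewrite vE ts00 scale0r add0r.
    by move/eqP; rewrite subr_eq0 => /eqP.
  exists ts; split; first by rewrite lt_def tspos ts0.
  by move=> y; have := v0 y; rewrite vE; move/eqP; rewrite subr_eq0 => /eqP.
move=> nz.
have vpos : forall x, 0 < v x.
  by move=> x; rewrite lt_def vge andbT; apply/eqP => h; apply: nz; exists x.
exfalso.
have [_ [_ vU]] := hU; have [_ [_ vW]] := hW.
have [R0 HR0] := vW de de0; have [R1 HR1] := vU de de0.
set Rb := Num.max (Num.max R0 (R1 + ts + 1)) 0.
have RbR0 : R0 <= Rb by rewrite /Rb !le_max lexx.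
have RbR1 : R1 + ts + 1 <= Rb by rewrite /Rb !le_max lexx orbT.
have Rb0 : 0 <= Rb by rewrite /Rb !le_max lexx orbT.
have [cb [cbB cbmin]] := evt_min (g := v) (A := [set x : V | `|x| <= Rb]) (M := Rb) (x0 := 0)
  cv (closed_ballV (rho := Rb)) (fun x h => h) (ltac:(by rewrite /= normr0)).
set eta := v cb.
have eta0 : 0 < eta := vpos cb.
have [Md HMd] := cont_bounded_ball (Rb + ts + 1) cDU.
set Mp := `|Md| + 1.
have Mp0 : 0 < Mp by rewrite ltr_wpDl.
have HMp : forall y, `|y| <= Rb + ts + 1 -> `|'D_d U y| <= Mp.
  by move=> y hy; apply: le_trans (HMd y hy) _; apply: le_trans (ler_norm _) _; rewrite lerDl.
set sg := Num.min 1 (eta / (2 * Mp)).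
have sg0 : 0 < sg by rewrite lt_min ltr01 divr_gt0 // mulr_gt0.
have sg1 : sg <= 1 by rewrite ge_min lexx.
have sgM : sg * (2 * Mp) <= eta.
  have : sg <= eta / (2 * Mp) by rewrite ge_min lexx orbT.
  by rewrite ler_pdivlMr // mulr_gt0.
have [s [s0 [xn hxn]] sts] := inf_adherent sg0 Sinf.
have tss : ts <= s by apply: ge_inf => //; split => //; exists xn.
have normsd : forall r, 0 <= r -> `|r *: d| = r by move=> r r0; rewrite normrZ nd mulr1 ger0_norm.
set vs := fun x => 1 * U (s *: d + x) + (-1) * W x.
have vsE : forall x, vs x = U (s *: d + x) - W x by move=> x; rewrite /vs mul1r mulN1r.
have gvs : good vs := good_lin 1 (-1) (good_shift (s *: d) gU) gW.
have cts : continuous (fun z : V => s *: d + z).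
  move=> z; apply: (@continuousD R V V (cst (s *: d)) id z); [exact: cst_continuous | exact: cvg_id].
have cUs : continuous (fun z : V => U (s *: d + z)).
  move=> y; exact: (continuous_comp (cts y) (cU _)).
have cvs : continuous vs := cont_lin (a := 1) (b := -1) cUs cW.
have claim1 : forall x, `|x| <= Rb -> 0 < vs x.
  move=> x hx.
  have hb : `|U (s *: d + x) - U (ts *: d + x)| <= Mp * (s - ts).
    apply: line_diff_bound => //; first by case: gU.
    move=> r h1 h2; apply: HMp; apply: le_trans (ler_normD _ _) _.
    rewrite normsd; last by apply: le_trans ts0 h1.
    have : r <= ts + 1 by apply: le_trans h2 _; apply: ltW; apply: lt_le_trans sts _; rewrite lerD2l.
    lra.
  have vx : eta <= v x by apply: cbmin.
  rewrite vE in vx; rewrite vsE.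
  have h4 : Mp * (s - ts) <= eta / 2.
    have : s - ts < sg by lra.
    nra.
  have h5 : - (U (s *: d + x) - U (ts *: d + x)) <= `|U (s *: d + x) - U (ts *: d + x)|.
    by rewrite -normrN ler_norm.
  lra.
set m := vs xn.
have m0 : m < 0 by rewrite /m vsE subr_lt0.
have m40 : 0 < - m / 4 by rewrite divr_gt0 // oppr_gt0.
have [R2 HR2] := vW (- m / 4) m40; have [R3 HR3] := vU (- m / 4) m40.
set Mk := Num.max R2 (R3 + s).
have normlow : forall x, `|x| <= `|s *: d + x| + s.
  move=> x; have {1}-> : x = (s *: d + x) - s *: d by rewrite addrAC subrr add0r.
  by apply: le_trans (ler_normB _ _) _; rewrite normsd.
have Kb : forall x, vs x <= m / 2 -> `|x| <= Mk.
  move=> x hx; rewrite leNgt; apply/negP => hM.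
  have h1 : R2 < `|x| by apply: le_lt_trans hM; rewrite le_max lexx.
  have h2 : R3 < `|s *: d + x|.
    have : R3 + s < `|x| by apply: le_lt_trans hM; rewrite le_max lexx orbT.
    have := normlow x; lra.
  have := HR2 x h1; have := HR3 _ h2; move: hx; rewrite vsE => hx h3 h4.
  have h5 := ler_norm (U (s *: d + x)); have h6 : - W x <= `|W x| by rewrite -normrN ler_norm.
  have h7 : - U (s *: d + x) <= `|U (s *: d + x)| by rewrite -normrN ler_norm.
  have h8 := ler_norm (W x).
  lra.
set Nr : R := N%:R.
have Nr0 : 0 < Nr by rewrite ltr0n.
set D := Nr * (Mk + `|xn|) ^+ 2 + 1.
have D0 : 0 < D by rewrite ltr_wpDl // mulr_ge0 // ?sqr_ge0 // ltW.
set ka := (- m / 4) / D.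
have ka0 : 0 < ka by rewrite divr_gt0.
have kaD : ka * D = - m / 4 by rewrite divfK // gt_eqF.
set zz := fun x => 1 * vs x + (- ka) * q xn x.
have gzz : good zz := good_lin 1 (- ka) gvs (good_q xn).
have czz : continuous zz := cont_lin (a := 1) (b := - ka) cvs (cont_q (y := xn)).
have xnK : vs xn <= m / 2 by rewrite -/m; lra.
have [x1 [x1K x1min]] := evt_min (g := zz) (A := [set x | vs x <= m / 2]) (M := Mk) (x0 := xn)
  czz (closed_le_fun (c := m / 2) cvs) Kb xnK.
have zz1 : zz x1 <= m.
  have h := x1min xn xnK.
  have e : zz xn = m by rewrite /zz q_self mulr0 addr0 mul1r.
  by rewrite -e.
have qx1 : q xn x1 <= D.
  apply: le_trans (q_le_norm x1 xn) _.
  have hx1 : `|x1 - xn| <= Mk + `|xn| by apply: le_trans (ler_normB _ _) _; rewrite lerD2r Kb.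
  have : `|x1 - xn| ^+ 2 <= (Mk + `|xn|) ^+ 2.
    by apply: lerXn2r => //; rewrite nnegrE // (le_trans _ hx1).
  rewrite /D => h; apply: le_trans (ler_wpM2l (ltW Nr0) h) _; rewrite lerDl //.
have vs1 : vs x1 < m / 2.
  have h1 : ka * q xn x1 <= - m / 4 by rewrite -kaD ler_wpM2l // ltW.
  move: zz1; rewrite /zz mul1r mulNr => h2.
  lra.
have a1 : vs x1 - 1 < vs x1 by lra.
have [r r0 Hr] := near_open cvs a1 vs1.
have lz := lap2_min gzz r0 (fun y hy => x1min y (ltW (Hr y hy).2)).
rewrite /zz (lap2_lin 1 (- ka) x1 gvs (good_q xn)) lap2_q mul1r in lz.
have lvs : 0 < lap2 vs x1.
  have : 0 < ka * (2 * Nr) by rewrite mulr_gt0 // mulr_gt0.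
  rewrite -/Nr in lz; lra.
have x1far : Rb < `|x1|.
  rewrite ltNge; apply/negP => h; have := claim1 x1 h; lra.
have Wsmall : `|W x1| < de by apply: HR0; apply: le_lt_trans x1far.
have Usmall : `|U (s *: d + x1)| < de.
  apply: HR1; have := normlow x1.
  have : s < ts + 1 by apply: lt_le_trans sts _; rewrite lerD2l.
  lra.
have Ult : U (s *: d + x1) <= W x1.
  have : vs x1 < 0 by lra.
  by rewrite vsE subr_lt0 => /ltW.
have fle := f_noninc hf hde Usmall Wsmall Ult.
move: lvs; rewrite /vs (lap2_lin 1 (-1) x1 (good_shift (s *: d) gU) gW) lap2_shift.
rewrite (sol_lap (s *: d + x1) hU) (sol_lap x1 hW).
lra.
Qed.
End S12.
Section S13.
Context {R : realType} {N : nat}.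
Notation V := 'rV[R]_N.

Lemma norm_lowb (t : R) (d y : V) : 0 <= t -> `|d| = 1 -> t - `|y| <= `|t *: d + y|.
Proof.
move=> t0 nd; have : `|t *: d| <= `|t *: d + y| + `|y|.
  have {1}-> : t *: d = (t *: d + y) - y by rewrite addrK.
  exact: ler_normB.
by rewrite normrZ nd mulr1 ger0_norm //; lra.
Qed.

Lemma far_small (g : V -> R) (d : V) (eps : R) : vanishes_at_infinity g -> `|d| = 1 ->
  0 < eps -> forall y, exists2 t, 0 <= t & `|g (t *: d + y)| < eps.
Proof.
move=> vg nd e0 y; have [M HM] := vg eps e0.
set t := Num.max M 0 + `|y| + 1.
have t0 : 0 <= t by rewrite /t !addr_ge0 // le_max lexx orbT.
exists t => //; apply: HM; apply: lt_le_trans (norm_lowb y t0 nd).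
have : M <= Num.max M 0 by rewrite le_max lexx.
rewrite /t; lra.
Qed.

Lemma L_case (U W : V -> R) (d : V) : vanishes_at_infinity U -> vanishes_at_infinity W ->
  `|d| = 1 -> (forall t, 0 <= t -> forall x, W x <= U (t *: d + x)) ->
  (forall x, 0 <= U x) /\ (forall x, W x <= 0).
Proof.
move=> vU vW nd H; split => y.
  rewrite leNgt; apply/negP => hy.
  have nd' : `|- d| = 1 by rewrite normrN.
  have hy' : 0 < - U y by rewrite oppr_gt0.
  have [t t0 Ht] := far_small vW nd' hy' y.
  have e : t *: d + (t *: - d + y) = y by rewrite scalerN addrA subrr add0r.
  have := H t t0 (t *: - d + y); rewrite e => h.
  have := ler_norm (- W (t *: - d + y)); rewrite normrN; lra.
rewrite leNgt; apply/negP => hy.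
have [t t0 Ht] := far_small vU nd hy y.
have := H t t0 y; have := ler_norm (U (t *: d + y)); lra.
Qed.

Lemma R_case (U W : V -> R) (d : V) (tau : R) : vanishes_at_infinity U ->
  `|d| = 1 -> 0 < tau -> (forall x, W x <= U x) -> (forall x, U (tau *: d + x) = W x) ->
  (forall x, 0 <= U x) /\ (forall x, 0 <= W x).
Proof.
move=> vU nd tau0 WU H.
have step : forall x, U (tau *: d + x) <= U x by move=> x; rewrite H WU.
have iter : forall (k : nat) x, U ((k%:R * tau) *: d + x) <= U x.
  elim => [|k IH] x; first by rewrite mul0r scale0r add0r.
  apply: le_trans (IH x).
  have -> : (k.+1%:R * tau) *: d + x = tau *: d + ((k%:R * tau) *: d + x).
    by rewrite -natr1 mulrDl mul1r scalerDl addrA (addrC (_ *: d)).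
  exact: step.
have Upos : forall x, 0 <= U x.
  move=> y; rewrite leNgt; apply/negP => hy.
  have hy' : 0 < - U y by rewrite oppr_gt0.
  have [M HM] := vU (- U y) hy'.
  set B := (Num.max M 0 + `|y| + 1) / tau.
  have Mm : 0 <= Num.max M 0 by rewrite le_max lexx orbT.
  have B0 : 0 <= B.
    apply: divr_ge0; last exact: ltW.
    have := normr_ge0 y; lra.
  have kb := archi_boundP B0.
  set k := Num.bound B in kb.
  have kt0 : 0 <= k%:R * tau by rewrite mulr_ge0 // ltW.
  have h1 : Num.max M 0 + `|y| + 1 < k%:R * tau by rewrite -ltr_pdivrMr.
  have h2 := norm_lowb y kt0 nd.
  have h3 : M <= Num.max M 0 by rewrite le_max lexx.
  have h4 : M < `|(k%:R * tau) *: d + y| by lra.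
  have := HM ((k%:R * tau) *: d + y) h4.
  have := iter k y; have := ler_norm (- U ((k%:R * tau) *: d + y)); rewrite normrN; lra.
by split => // x; rewrite -H.
Qed.
End S13.

Section S14.
Context {R : realType} {N : nat}.
Notation V := 'rV[R]_N.

Lemma noSign (f : R -> R) (de : R) (U W : V -> R) :
  (0 < N)%N -> C1 f -> 0 < de -> (forall s, `|s| < de -> derive1 f s <= 0) ->
  is_solution f U -> is_solution f W -> (forall x, W x <= U x) -> U <> W ->
  (forall x, 0 <= U x) /\ ((forall x, W x <= 0) \/ (forall x, 0 <= W x)).
Proof.
move=> N0 hf de0 hde hU hW WU UW.
pose j : 'I_N := Ordinal N0.
have nd := @norm_basis R N j.
have cD : continuous (fun y => 'D_(basis_vec j) U y) := sol_pcont (i := j) hU.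
have [_ [_ vU]] := hU; have [_ [_ vW]] := hW.
case: (slide N0 hf de0 hde hU hW WU UW nd cD) => [H|[tau [tau0 H]]].
  by have [h1 h2] := L_case vU vW nd H; split => //; left.
by have [h1 h2] := R_case vU nd tau0 WU H; split => //; right.
Qed.
End S14.


Local Close Scope classical_set_scope.
Unset Implicit Arguments.
Set Strict Implicit.

Theorem corollary1p1 (R : realType) (N : nat) (hN : (1 <= N)%N)
  (f : R -> R) (hf : C1 f) (hf0 : f 0 = 0)
  (hdelta : exists2 delta : R, 0 < delta &
     forall s : R, `|s| < delta -> derive1 f s <= 0)
  (u1 u2 : 'rV[R]_N -> R)
  (hu1 : is_solution f u1) (hu2 : is_solution f u2)
  (hdist : u1 <> u2)
  (hnz1 : exists x, u1 x <> 0) (hnz2 : exists x, u2 x <> 0)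
  (hsign : changes_sign u1 \/ changes_sign u2) :
  exists x y : 'rV[R]_N, u1 x - u2 x > 0 /\ u1 y - u2 y < 0.
Proof.
have [de de0 hde] := hdelta.
have N0 : (0 < N)%N := hN.
have contra : forall U W : 'rV[R]_N -> R, is_solution f U -> is_solution f W ->
    (forall x, W x <= U x) -> U <> W ->
    (changes_sign U \/ changes_sign W) -> False.
  move=> U W hU hW WU UW hs.
  have [Upos Wsg] := noSign N0 hf de0 hde hU hW WU UW.
  case: hs => [[x [y [_ hy]]]|[x [y [hx hy]]]].
    by have := Upos y; rewrite leNgt hy.
  case: Wsg => h.
    by have := h x; rewrite leNgt hx.
  by have := h y; rewrite leNgt hy.
case: (pselect (exists x, u1 x - u2 x > 0)) => [[x hx]|nx];
  case: (pselect (exists y, u1 y - u2 y < 0)) => [[y hy]|ny].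
- by exists x, y.
- exfalso; apply: (contra u1 u2 hu1 hu2) => // z.
  by rewrite -subr_ge0 leNgt; apply/negP => h; apply: ny; exists z.
- exfalso; apply: (contra u2 u1 hu2 hu1) => //.
  + move=> z; rewrite -subr_ge0 leNgt; apply/negP => h; apply: nx; exists z.
    by rewrite -opprB oppr_gt0.
  + by move=> e; apply: hdist.
  + by case: hsign; [right|left].
- exfalso; apply: (contra u1 u2 hu1 hu2) => // z.
  by rewrite -subr_ge0 leNgt; apply/negP => h; apply: ny; exists z.
Qed.
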